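(* Let $G$ be a connected graph with $n$ vertices, $k$ a positive integer, $\tau=\{1,\dots,k\}$, and $f:\tau\to\mathbb{Q}_{\ge1}$ a fitness function with $f(1)<f(2)<\dots<f(k)$. Let $M_0\in\Omega_0(G,\tau)$ and $M=M(G,\tau,f,M_0)$. Then for every $j\in\{2,\dots,k\}$, $\mathbb{E}(A_{\ge j})\le\sum_{i=j}^k\frac{f(i)}{f(i)-f(i-1)}(n+1)n^3$.
   Context: For $G=(V,E)$, $N(v)$ is the neighbourhood of $v$. For a state $S:V\to\tau$, $S|_{v\to w}$ equals $S$ except $w$ gets type $S(v)$. The Moran process $M(G,\tau,f,M_0)$: Markov chain on states from $M_0$; given $M_t$, choose $v$ with probability $f(M_t(v))/\sum_uf(M_t(u))$, then $w\in N(v)$ uniformly, set $M_{t+1}=M_t|_{v\to w}$. $V_i(t)=\{v:M_t(v)=i\}$. $\Omega_0(G,\tau)$ is the set of states with range $\tau$. For $j\in\{2,\dots,k\}$, $A_{\ge j}=\min\{t\in\mathbb{Z}_{\ge0}: \bigcup_{i\ge j}V_i(t)=\emptyset \text{ or } V_i(t)=V\text{ for some } i\ge j\}$. *)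

(* Defs.v *)
From mathcomp Require Import all_boot all_order all_algebra.
Set Implicit Arguments. Unset Strict Implicit. Unset Printing Implicit Defensive.
Import Order.TTheory GRing.Theory Num.Theory.
Local Open Scope ring_scope.

(* Types tau = {1,...,k} are encoded by 'I_k : ordinal i stands for type (i+1).
   The fitness function is f : nat -> rat, only its values on 1..k matter. *)

Section Moran.
Variables (V : finType) (adj : rel V) (k : nat) (f : nat -> rat).

Definition state := {ffun V -> 'I_k}.

Definition nbhd (v : V) : {set V} := [set w | adj v w].

Definition typ (S : state) (v : V) : nat := (S v).+1.

Definition fit (S : state) (v : V) : rat := f (typ S v).

Definition total_fit (S : state) : rat := \sum_(u : V) fit S u.

Definition upd (S : state) (v w : V) : state :=
  [ffun u => if u == w then S v else S u].

Definition trans (S S' : state) : rat :=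
  \sum_(v : V) \sum_(w in nbhd v)
     (if S' == upd S v w then fit S v / total_fit S / (#|nbhd v|)%:R else 0).

(* the stopping condition defining A_{>= j}: either no vertex has type >= j,
   or all vertices have the same type i >= j *)
Definition absorbed (j : nat) (S : state) : bool :=
  [forall u, typ S u < j]%N || [exists i : 'I_k, (j <= i.+1)%N && [forall u, S u == i]].

(* sub-probability mass at time t restricted to the event {A_{>=j} > t}:
   p t S = Pr(M_t = S and M_s is not absorbed for all s <= t) *)
Fixpoint alive (j : nat) (M0 : state) (t : nat) (S : state) : rat :=
  match t with
  | 0 => if (S == M0) && ~~ absorbed j M0 then 1 else 0
  | t'.+1 => if absorbed j S then 0
             else \sum_(S0 : state) alive j M0 t' S0 * trans S0 S
  end.

Definition prob_A_gt (j : nat) (M0 : state) (t : nat) : rat :=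
  \sum_(S : state) alive j M0 t S.

(* E(A_{>=j}) = sum_{t >= 0} Pr(A_{>=j} > t) (possibly +oo); 
   "E(A) <= B" means every partial sum of this nonnegative series is <= B. *)
Definition expectation_A_le (j : nat) (M0 : state) (B : rat) : Prop :=
  forall T : nat, \sum_(t < T) prob_A_gt j M0 t <= B.

End Moran.

Definition connected_graph (V : finType) (adj : rel V) : Prop :=
  forall x y : V, connect adj x y.

(* Main.v *)
Require Import Defs.
From mathcomp Require Import all_boot all_order all_algebra.
From mathcomp Require Import zify ring lra.
Set Implicit Arguments. Unset Strict Implicit. Unset Printing Implicit Defensive.
Import Order.TTheory GRing.Theory Num.Theory.
Local Open Scope ring_scope.

Section Abstract.
Variables (V : finType) (adj : rel V) (k : nat) (f : nat -> rat) (j : nat) (M0 : state V k).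
Variables (Phi : state V k -> rat) (B delta : rat).
Hypothesis delta_pos : 0 < delta.
Hypothesis Phi_ge0 : forall S, 0 <= Phi S.
Hypothesis Phi_leB : forall S, Phi S <= B.
Hypothesis trans_ge0 : forall S S' : state V k, 0 <= trans adj f S S'.
Hypothesis drift : forall S : state V k, ~~ absorbed j S ->
  \sum_(S' : state V k) trans adj f S S' = 1 /\ Phi S + delta <= \sum_(S' : state V k) trans adj f S S' * Phi S'.

Lemma alive_ge0 t S : 0 <= alive adj f j M0 t S.
Proof.
elim: t S => [|t IH] S /=; first by case: ifP.
case: ifP => // _; apply: sumr_ge0 => S0 _; apply: mulr_ge0 => //.
Qed.

Lemma alive_abs t S : absorbed j S -> alive adj f j M0 t S = 0.
Proof.
case: t => [|t] /= H; last by rewrite H.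
by case: eqP => [E|] //=; rewrite -E H.
Qed.

Let Q t := \sum_(S : state V k) alive adj f j M0 t S * (B - Phi S).

Lemma Q_step t : delta * prob_A_gt adj f j M0 t + Q t.+1 <= Q t.
Proof.
have step1 : Q t.+1 <= \sum_(S' : state V k) (\sum_(S : state V k) alive adj f j M0 t S * trans adj f S S') * (B - Phi S').
  rewrite /Q; apply: ler_sum => S' _ /=; case: ifP => _; last by [].
  rewrite mul0r; apply: mulr_ge0; last by rewrite subr_ge0.
  by apply: sumr_ge0 => S _; apply: mulr_ge0 => //; apply: alive_ge0.
have step2 : \sum_(S' : state V k) (\sum_(S : state V k) alive adj f j M0 t S * trans adj f S S') * (B - Phi S')
   = \sum_(S : state V k) alive adj f j M0 t S * \sum_(S' : state V k) trans adj f S S' * (B - Phi S').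
  under eq_bigr do rewrite mulr_suml.
  rewrite exchange_big /=; apply: eq_bigr => S _; rewrite mulr_sumr.
  by apply: eq_bigr => S' _; rewrite mulrA.
have step3 : \sum_(S : state V k) alive adj f j M0 t S * \sum_(S' : state V k) trans adj f S S' * (B - Phi S')
   <= \sum_(S : state V k) alive adj f j M0 t S * (B - Phi S - delta).
  apply: ler_sum => S _.
  have [H|H] := boolP (absorbed j S); first by rewrite alive_abs // !mul0r.
  apply: ler_wpM2l; first exact: alive_ge0.
  have [H1 H2] := drift H.
  under eq_bigr do rewrite mulrBr.
  rewrite sumrB -mulr_suml H1 mul1r; lra.
have e : Q t - delta * prob_A_gt adj f j M0 t = \sum_(S : state V k) alive adj f j M0 t S * (B - Phi S - delta).
  rewrite /Q /prob_A_gt mulr_sumr -sumrB; apply: eq_bigr => S _; ring.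
rewrite step2 in step1; have := le_trans step1 step3; rewrite -e; lra.
Qed.

Lemma Q_ge0 t : 0 <= Q t.
Proof. apply: sumr_ge0 => S _; apply: mulr_ge0; first exact: alive_ge0. by rewrite subr_ge0. Qed.

Lemma Q0_le : Q 0 <= B.
Proof.
have B0 : 0 <= B by apply: le_trans (Phi_ge0 M0) (Phi_leB M0).
rewrite /Q (bigD1 M0) //= big1 ?addr0.
  case: ifP => _; last by rewrite mul0r.
  by rewrite mul1r; have := Phi_ge0 M0; lra.
by move=> S /negbTE H; rewrite H mul0r.
Qed.

Lemma abstract_bound T : \sum_(t < T) prob_A_gt adj f j M0 t <= B / delta.
Proof.
have key : delta * \sum_(t < T) prob_A_gt adj f j M0 t + Q T <= Q 0.
  elim: T => [|T IH]; first by rewrite big_ord0 mulr0 add0r.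
  rewrite big_ord_recr /= mulrDr.
  have := Q_step T; lra.
have := Q_ge0 T; have := Q0_le => h1 h2.
rewrite ler_pdivlMr // mulrC; lra.
Qed.
End Abstract.
Section Concrete.
Variables (V : finType) (adj : rel V).
Hypothesis adj_sym : symmetric adj.
Hypothesis G_conn : connected_graph adj.
Variables (k : nat) (f : nat -> rat).
Hypothesis f_ge1 : forall i : nat, (1 <= i <= k)%N -> 1 <= f i.
Hypothesis f_incr : forall i : nat, (1 <= i)%N -> (i < k)%N -> f i < f i.+1.
Variable j : nat.
Hypothesis hj : (2 <= j <= k)%N.

Lemma f_mono a b : (1 <= a)%N -> (a <= b)%N -> (b <= k)%N -> f a <= f b.
Proof.
move=> ha hab hb; elim: b hab hb => [|b IH] hab hb; first by lia.
rewrite leq_eqVlt in hab; case/orP: hab => [/eqP -> //| hab].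
apply: le_trans (IH hab (ltnW hb)) _; apply: ltW; apply: f_incr => //; lia.
Qed.

Definition cc i := f i / (f i - f i.-1).

Lemma cc_gt0 i : (j <= i <= k)%N -> 0 < cc i.
Proof.
move=> hi; rewrite /cc; apply: divr_gt0.
  have := f_ge1 (i:=i); move=> h; have : 1 <= f i by apply: h; lia. lra.
have : f i.-1 < f i.-1.+1 by apply: f_incr; lia.
have -> : i.-1.+1 = i by lia. lra.
Qed.

Lemma cc_mul i : (j <= i <= k)%N -> cc i * (f i - f i.-1) = f i.
Proof.
move=> hi; have : f i.-1 < f i.-1.+1 by apply: f_incr; lia.
have -> : i.-1.+1 = i by lia. move=> h.
rewrite /cc; field; lra.
Qed.

Definition psi (t : nat) := \sum_(j <= i < k.+1) (if (i <= t)%N then cc i else 0).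
Definition CC := \sum_(j <= i < k.+1) cc i.

Lemma psi_mono a b : (a <= b)%N -> psi a <= psi b.
Proof.
move=> hab; rewrite /psi big_nat [X in _ <= X]big_nat; apply: ler_sum => i /andP [h1 h2].
case: ifP => ia; first by rewrite (leq_trans ia hab) //.
case: ifP => _ //; apply: ltW; apply: cc_gt0; lia.
Qed.

Lemma psi_ge0 a : 0 <= psi a.
Proof.
rewrite /psi big_nat; apply: sumr_ge0 => i /andP [h1 h2]; case: ifP => // _.
apply: ltW; apply: cc_gt0; lia.
Qed.

Lemma psi_leC a : psi a <= CC.
Proof.
rewrite /psi /CC big_nat [X in _ <= X]big_nat; apply: ler_sum => i /andP [h1 h2].
case: ifP => // _; apply: ltW; apply: cc_gt0; lia.
Qed.

Lemma sum_nat_ge (F : nat -> rat) a m b : (forall i, (a <= i < b)%N -> 0 <= F i) ->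
  (a <= m < b)%N -> F m <= \sum_(a <= i < b) F i.
Proof.
move=> hF hm; rewrite (@big_cat_nat _ _ _ m) /=; try lia.
rewrite (@big_ltn _ _ _ m b); last lia.
have h1 : 0 <= \sum_(a <= i < m) F i by rewrite big_nat; apply: sumr_ge0 => i hi; apply: hF; lia.
have h2 : 0 <= \sum_(m.+1 <= i < b) F i by rewrite big_nat; apply: sumr_ge0 => i hi; apply: hF; lia.
lra.
Qed.

Lemma psi_gap m b : (j <= m <= k)%N -> (b < m)%N -> cc m <= psi m - psi b.
Proof.
move=> hm hb; rewrite /psi -sumrB.
have -> : cc m = (if (m <= m)%N then cc m else 0) - (if (m <= b)%N then cc m else 0).
  by rewrite leqnn leqNgt hb /= subr0.
apply: (@sum_nat_ge (fun i => (if (i <= m)%N then cc i else 0) - (if (i <= b)%N then cc i else 0))); last lia.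
move=> i hi; have := cc_gt0 (i:=i); case: ifP; case: ifP => //; try lia; move=> *; try lra.
have : 0 < cc i by apply: cc_gt0; lia. lra.
Qed.


Definition dg (v : V) : rat := (#|nbhd adj v|)%:R.
Definition Phi (S : state V k) : rat := \sum_(u : V) psi (typ S u) / dg u.

Lemma typ_upd (S : state V k) v w u : typ (upd S v w) u = if u == w then typ S v else typ S u.
Proof. by rewrite /typ /upd ffunE; case: eqP. Qed.

Lemma Phi_upd S v w : Phi (upd S v w) = Phi S + (psi (typ S v) - psi (typ S w)) / dg w.
Proof.
rewrite /Phi (bigD1 w) //= [in RHS](bigD1 w) //= typ_upd eqxx.
have -> : \sum_(u | u != w) psi (typ (upd S v w) u) / dg u = \sum_(u | u != w) psi (typ S u) / dg u.
  by apply: eq_bigr => u /negbTE h; rewrite typ_upd h.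
rewrite mulrBl; ring.
Qed.

Lemma typ_range (S : state V k) u : (1 <= typ S u <= k)%N.
Proof. rewrite /typ; have := ltn_ord (S u); lia. Qed.

Lemma fit_ge1 (S : state V k) v : 1 <= fit f S v.
Proof. exact: f_ge1 (typ_range S v). Qed.

Lemma W_ge0 (S : state V k) : 0 <= total_fit f S.
Proof. apply: sumr_ge0 => u _; have := fit_ge1 S u; lra. Qed.

Lemma trans_ge0 (S S' : state V k) : 0 <= trans adj f S S'.
Proof.
apply: sumr_ge0 => v _; apply: sumr_ge0 => w _; case: ifP => // _.
apply: divr_ge0; last exact: ler0n.
apply: divr_ge0; last exact: W_ge0.
have := fit_ge1 S v; lra.
Qed.

Lemma sum_trans (S : state V k) (g : state V k -> rat) :
  \sum_(S' : state V k) trans adj f S S' * g S' =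
  \sum_(v : V) \sum_(w in nbhd adj v) fit f S v / total_fit f S / dg v * g (upd S v w).
Proof.
rewrite /trans; under eq_bigr do rewrite mulr_suml.
rewrite exchange_big; apply: eq_bigr => v _.
under eq_bigr do rewrite mulr_suml.
rewrite exchange_big; apply: eq_bigr => w _.
rewrite (bigD1 (upd S v w)) //= eqxx big1 ?addr0 // => S' /negbTE ->; by rewrite mul0r.
Qed.

Lemma Phi_ge0 S : 0 <= Phi S.
Proof. apply: sumr_ge0 => u _; apply: divr_ge0; [exact: psi_ge0 | exact: ler0n]. Qed.

Lemma Phi_leB S : Phi S <= #|V|%:R * CC.
Proof.
apply: (@le_trans _ _ (\sum_(u : V) CC)); first last. by rewrite sumr_const mulr_natl.
apply: ler_sum => u _; rewrite /dg.
have := psi_leC (typ S u); have := psi_ge0 (typ S u).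
case: (#|nbhd adj u|) => [|d] h1 h2; first by rewrite invr0 mulr0; apply: le_trans h2.
have hd : 1 <= (d.+1)%:R :> rat by rewrite ler1n.
rewrite ler_pdivrMr; last lra.
nra.
Qed.

Lemma crossing (P : pred V) x y : connect adj x y -> P x -> ~~ P y ->
  exists a b, [/\ adj a b, P a & ~~ P b].
Proof.
move/connectP => [p]; elim: p x => [|z p IH] x /=; first by move=> _ -> ->.
move=> /andP [axz pz] hy Px Py.
case Pz: (P z); first exact: IH pz hy Pz Py.
by exists x, z; rewrite Pz.
Qed.

Lemma has_nbr x y : x != y -> (0 < #|nbhd adj x|)%N.
Proof.
move=> hxy; have := G_conn x y; move/connectP => [[|z p]] /=.
  by move=> _ e; rewrite e eqxx in hxy.
move=> /andP [axz _] _; apply/card_gt0P; exists z; by rewrite /nbhd inE.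
Qed.

Lemma nonabs_info (S : state V k) : ~~ absorbed j S ->
  (exists x0 y0 : V, x0 != y0) /\
  exists x y, [/\ adj x y, (forall u, typ S u <= typ S x)%N, (typ S y < typ S x)%N & (j <= typ S x)%N].
Proof.
rewrite /absorbed negb_or negb_forall negb_exists => /andP [/existsP [u0 hu0] /forallP hall].
case: (@arg_maxnP V u0 predT (typ S) isT) => x0 _ hx0.
have hjx0 : (j <= typ S x0)%N by have := hx0 u0 isT; move: hu0; rewrite -leqNgt; lia.
have := hall (S x0); rewrite negb_and.
have -> : (j <= (S x0).+1)%N by exact: hjx0.
rewrite /= negb_forall => /existsP [y0 hy0].
have hlt : (typ S y0 < typ S x0)%N.
  have hneq : typ S y0 != typ S x0.
    apply/negP => /eqP h; move/negP: hy0; apply; apply/eqP; apply: val_inj; rewrite /typ in h; by case: h.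
  have := hx0 y0 isT; move: hneq; rewrite /geq /=; lia.
have hne : x0 != y0 by apply/eqP => e; rewrite e ltnn in hlt.
split; first by exists x0, y0.
have hPy : typ S y0 != typ S x0 by rewrite neq_ltn hlt.
have [a [b [hab Pa Pb]]] := crossing (P := fun u => typ S u == typ S x0) (G_conn x0 y0) (eqxx _) hPy.
move/eqP: Pa => Pa; exists a, b; split => //.
- by move=> u; rewrite Pa; exact: hx0.
- by rewrite Pa; have := hx0 b isT; move: Pb; lia.
- by rewrite Pa.
Qed.

Lemma sum_ge2 (F : V -> rat) x y : (forall v, 0 <= F v) -> x != y ->
  F x + F y <= \sum_(v : V) F v.
Proof.
move=> hF hxy; rewrite (bigD1 x) //= (bigD1 y) /=; last by rewrite eq_sym hxy.
have : 0 <= \sum_(i | (i != x) && (i != y)) F i by apply: sumr_ge0.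
lra.
Qed.

Lemma sum_ge1 (F : V -> rat) x : (forall v, 0 <= F v) -> F x <= \sum_(v : V) F v.
Proof.
move=> hF; rewrite (bigD1 x) //=.
have : 0 <= \sum_(i | i != x) F i by apply: sumr_ge0.
lra.
Qed.

Lemma drift (S : state V k) : ~~ absorbed j S ->
  \sum_(S' : state V k) trans adj f S S' = 1 /\
  Phi S + 1 / (#|V|%:R ^+ 3) <= \sum_(S' : state V k) trans adj f S S' * Phi S'.
Proof.
move=> H.
have [[x0 [y0 hne]] [x [y [hxy hmax hlt hjx]]]] := nonabs_info H.
have hdeg : forall v, (0 < #|nbhd adj v|)%N.
  move=> v; case: (eqVneq v x0) => [->|hv]; first exact: has_nbr hne.
  exact: has_nbr hv.
have hdg : forall v, 0 < dg v by move=> v; rewrite /dg ltr0n.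
set W := total_fit f S.
have hW : 0 < W.
  have := sum_ge1 (F := fit f S) x0 (fun v => le_trans ler01 (fit_ge1 S v)).
  have := fit_ge1 S x0; rewrite /W /total_fit; lra.
have sum_p1 : \sum_(v : V) \sum_(w in nbhd adj v) fit f S v / W / dg v = 1.
  transitivity (\sum_(v : V) fit f S v / W).
    apply: eq_bigr => v _; rewrite sumr_const -mulr_natr.
    have := hdg v; rewrite /dg => h; field; lra.
  by rewrite -mulr_suml divff // gt_eqF.
split.
  rewrite -(eq_bigr _ (fun S' _ => mulr1 (trans adj f S S'))) sum_trans.
  by rewrite -[RHS]sum_p1; apply: eq_bigr => v _; apply: eq_bigr => w _; rewrite mulr1.
rewrite sum_trans.
under eq_bigr do under eq_bigr do rewrite Phi_upd mulrDr.
under eq_bigr do rewrite big_split.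
rewrite big_split /=.
have -> : \sum_(v : V) \sum_(w in nbhd adj v) fit f S v / W / dg v * Phi S = Phi S.
  rewrite -[RHS]mul1r -sum_p1 mulr_suml; apply: eq_bigr => v _; by rewrite mulr_suml.
apply: lerD => //.
set G := fun v w => fit f S v / W / dg v * ((psi (typ S v) - psi (typ S w)) / dg w).
set Hf := fun v w => (f (typ S v) - f (typ S w)) * (psi (typ S v) - psi (typ S w)) / (W * dg v * dg w).
have eH : forall v w, G v w + G w v = Hf v w.
  move=> v w; rewrite /G /Hf /fit; have := hdg v; have := hdg w => h1 h2; field; lra.
have H_ge0 : forall v w, 0 <= Hf v w.
  move=> v w; rewrite /Hf; apply: divr_ge0; last first.
    by apply: mulr_ge0; [apply: mulr_ge0; [lra|apply: ltW]|apply: ltW].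
  have rv := typ_range S v; have rw := typ_range S w.
  case: (leqP (typ S v) (typ S w)) => h.
    have := f_mono (a := typ S v) (b := typ S w); have := psi_mono h.
    move=> h1 h2; have {h2} h2 : f (typ S v) <= f (typ S w) by apply: h2; lia.
    nra.
  have := f_mono (a := typ S w) (b := typ S v); have := psi_mono (ltnW h).
  move=> h1 h2; have {h2} h2 : f (typ S w) <= f (typ S v) by apply: h2; lia.
  nra.
have eD : \sum_(v : V) \sum_(w in nbhd adj v) G v w = \sum_(v : V) \sum_(w : V) (if adj v w then G v w else 0).
  apply: eq_bigr => v _; rewrite big_mkcond; apply: eq_bigr => w _; by rewrite /nbhd inE.
have eD2 : \sum_(v : V) \sum_(w : V) (if adj v w then G v w else 0) = \sum_(v : V) \sum_(w : V) (if adj v w then G w v else 0).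
  rewrite exchange_big; apply: eq_bigr => v _; apply: eq_bigr => w _; by rewrite adj_sym.
have e2D : 2 * \sum_(v : V) \sum_(w in nbhd adj v) G v w = \sum_(v : V) \sum_(w : V) (if adj v w then Hf v w else 0).
  rewrite mulr2n mulrDl mul1r {1}eD eD2 eD -big_split; apply: eq_bigr => v _.
  rewrite -big_split; apply: eq_bigr => w _.
case: ifP => _ /=; [rewrite addrC; exact: eH | exact: addr0].
have hyx : adj y x by rewrite adj_sym.
have hxy_ne : x != y by apply/eqP => e; rewrite e ltnn in hlt.
have hsum : Hf x y + Hf y x <= \sum_(v : V) \sum_(w : V) (if adj v w then Hf v w else 0).
  apply: le_trans (sum_ge2 (F := fun v => \sum_(w : V) (if adj v w then Hf v w else 0)) _ hxy_ne).
    apply: lerD.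
      by apply: le_trans (sum_ge1 (F := fun w => if adj x w then Hf x w else 0) y _); rewrite ?hxy // => w; case: ifP.
    by apply: le_trans (sum_ge1 (F := fun w => if adj y w then Hf y w else 0) x _); rewrite ?hyx // => w; case: ifP.
  by move=> v; apply: sumr_ge0 => w _; case: ifP.
have eyx : Hf y x = Hf x y by rewrite /Hf; field; have := hdg x; have := hdg y; lra.
set m := typ S x.
have hmk : (m <= k)%N by have := typ_range S x; lia.
have ry := typ_range S y.
have hfm : 0 < f m - f m.-1.
  have : f m.-1 < f m.-1.+1 by apply: f_incr; lia.
  have -> : m.-1.+1 = m by lia. lra.
have hfy : f (typ S y) <= f m.-1 by apply: f_mono; lia.
have hpsi : cc m <= psi m - psi (typ S y) by apply: psi_gap; lia.
have hcc : 0 < cc m by apply: cc_gt0; lia.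
have hN : f m <= (f m - f (typ S y)) * (psi m - psi (typ S y)).
  have e : cc m * (f m - f m.-1) = f m by apply: cc_mul; lia.
  have : (f m - f m.-1) * cc m <= (f m - f (typ S y)) * (psi m - psi (typ S y)) by apply: ler_pM; lra.
  by rewrite mulrC e.
have hWle : W <= #|V|%:R * f m.
  apply: (@le_trans _ _ (\sum_(u : V) f m)); last by rewrite sumr_const mulr_natl.
  rewrite /W /total_fit; apply: ler_sum => u _.
  have h1 := typ_range S u; have h2 := hmax u; rewrite /fit; apply: f_mono => //.
have hdgle : forall v, dg v <= #|V|%:R by move=> v; rewrite /dg ler_nat max_card.
have hn : 0 < #|V|%:R :> rat by apply: lt_le_trans (hdg x) (hdgle x).
have hfm1 : 1 <= f m by apply: f_ge1; exact: typ_range S x.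
have hDn : W * dg x * dg y <= #|V|%:R ^+ 3 * f m.
  have := hdgle x; have := hdgle y; have := hdg x; have := hdg y.
  move=> a1 a2 a3 a4.
  have e3 : #|V|%:R ^+ 3 * f m = (#|V|%:R * f m) * #|V|%:R * #|V|%:R by rewrite !exprS expr0; ring.
  rewrite e3; apply: ler_pM; [apply: mulr_ge0; lra | lra | | lra].
  apply: ler_pM; lra.
have hHxy : 1 / (#|V|%:R ^+ 3) <= Hf x y.
  have hDn0 : 0 < W * dg x * dg y by apply: mulr_gt0; [apply: mulr_gt0|].
  rewrite /Hf -/m ler_pdivlMr //.
  have hn3 : 0 < #|V|%:R ^+ 3 :> rat by apply: exprn_gt0.
  apply: le_trans hN.
  have e : 1 / (#|V|%:R ^+ 3) * (#|V|%:R ^+ 3 * f m) = f m by field; lra.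
  rewrite -[X in _ <= X]e; apply: ler_wpM2l => //; apply: divr_ge0; lra.
have : 2 * (1 / (#|V|%:R ^+ 3)) <= 2 * \sum_(v : V) \sum_(w in nbhd adj v) G v w.
  rewrite e2D; apply: le_trans hsum; rewrite eyx; lra.
lra.
Qed.

End Concrete.

Theorem lemma17 (V : finType) (adj : rel V)
  (adj_sym : symmetric adj) (adj_irr : irreflexive adj)
  (G_conn : connected_graph adj)
  (k : nat) (k_pos : (0 < k)%N) (f : nat -> rat)
  (f_ge1 : forall i : nat, (1 <= i <= k)%N -> 1 <= f i)
  (f_incr : forall i : nat, (1 <= i)%N -> (i < k)%N -> f i < f i.+1)
  (M0 : state V k) (j : nat) (hj : (2 <= j <= k)%N) :
  expectation_A_le adj f j M0
    (\sum_(j <= i < k.+1) f i / (f i - f i.-1)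
        * ((#|V| + 1) * #|V| ^ 3)%:R).
Proof.
move=> T.
have hCC : 0 <= CC k f j.
  rewrite /CC big_nat; apply: sumr_ge0 => i hi; apply: ltW; apply: (cc_gt0 f_ge1 f_incr hj); lia.
rewrite -mulr_suml -/(CC k f j).
case: (posnP #|V|) => hn.
  rewrite big1 ?mulr_ge0 // => t _; rewrite /prob_A_gt big1 // => S _.
  apply: alive_abs; rewrite /absorbed; apply/orP; left; apply/forallP => u.
  by move: (max_card (pred1 u)); rewrite hn card1.
have hn' : 0 < #|V|%:R :> rat by rewrite ltr0n.
have hd : 0 < 1 / (#|V|%:R ^+ 3) :> rat by apply: divr_gt0; [lra | apply: exprn_gt0].
apply: le_trans (abstract_bound M0 hd (Phi_ge0 adj f_ge1 f_incr hj) (Phi_leB adj f_ge1 f_incr hj)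
   (trans_ge0 adj f_ge1 hj) (drift adj_sym G_conn f_ge1 f_incr hj) T) _.
rewrite natrM natrX natrD !exprS expr0.
have e : #|V|%:R * CC k f j / (1 / (#|V|%:R * (#|V|%:R * (#|V|%:R * 1))))
   = CC k f j * (#|V|%:R * (#|V|%:R * (#|V|%:R * (#|V|%:R * 1)))) :> rat by field; lra.
rewrite e; apply: ler_wpM2l => //.
nra.
Qed.
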